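(* Let $p>1$, $\beta=1/(p-1)$, $\gamma=\frac{p-2}{2(p-1)}$, and let $\phi$ be a global solution on $[0,\infty)$ of $\phi''=\tfrac12 y\phi'-\gamma\phi-|\phi'|^p$, $\phi(0)=0$, $\phi'(0)=\alpha>0$, with $\phi,\phi'>0$ on $(0,\infty)$ and such that, for some $\bar R>0$, $\phi''<0$ on $[0,\bar R)$ and $\phi''>0$ on $(\bar R,\infty)$. Let $y_0>0$ be such that $\phi,\phi',\phi''>0$ on $[y_0,\infty)$. Then: (i) there exists $C>0$ such that $\phi'(y)\le Cy^\beta$ for all $y\ge y_0$; (ii) the function $Z(y)=y^{-1}(\phi'(y))^{p-1}$ satisfies $\liminf_{y\to\infty}Z(y)\ge\frac12\min(1,\beta)$; in particular there exists $C_1>0$ such that $\phi'(y)\ge C_1y^\beta$ for all $y\ge1$. *)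

(* Defs.v *)
From Stdlib Require Import Reals.
From Coquelicot Require Import Coquelicot.
Open Scope R_scope.

Definition beta (p : R) : R := 1 / (p - 1).
Definition gamma (p : R) : R := (p - 2) / (2 * (p - 1)).

(* |x|^p for real p > 0, with the convention 0^p = 0
   (Stdlib's Rpower is only meaningful for positive bases). *)
Definition absp (x p : R) : R :=
  if Req_EM_T x 0 then 0 else Rpower (Rabs x) p.

Definition Zf (p : R) (dphi : R -> R) (y : R) : R :=
  / y * Rpower (dphi y) (p - 1).

(* Main.v *)
Require Import Defs.
From Stdlib Require Import Reals Lra Classical.
From Coquelicot Require Import Coquelicot.
Open Scope R_scope.
Lemma H_mvt (f df : R -> R) a b : a < b ->
  (forall c, a <= c <= b -> is_derive f c (df c)) ->
  exists c, a < c < b /\ f b - f a = df c * (b - a).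
Proof.
  intros Hab Hd. destruct (MVT_cor2 f df a b Hab) as [c [H1 H2]].
  - intros c Hc. apply is_derive_Reals. auto.
  - exists c. auto.
Qed.

Lemma H_cont (f : R -> R) x l : is_derive f x l -> continuity_pt f x.
Proof.
  intros H. apply derivable_continuous_pt. exists l. apply is_derive_Reals. auto.
Qed.

Lemma H_Zder (p : R) (w : R -> R) y dw : 0 < y -> 0 < w y -> is_derive w y dw ->
  is_derive (fun t => / t * Rpower (w t) (p - 1)) y
    (/ y * Rpower (w y) (p - 1) * ((p - 1) * (dw / w y) - / y)).
Proof.
  intros Hy Hw Hd.
  assert (H1 : is_derive (fun t : R => / t) y (- 1 / y ^ 2)).
  { apply (is_derive_inv (fun t => t)). apply (is_derive_id y). lra. }
  assert (H2 : is_derive (fun t => Rpower (w t) (p-1)) y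
                 (dw * ((p-1) * Rpower (w y) (p - 1 - 1)))).
  { apply (is_derive_comp (fun x => Rpower x (p-1)) w y). 2: exact Hd.
    apply is_derive_Reals. apply derivable_pt_lim_power. exact Hw. }
  generalize (is_derive_mult _ _ y _ _ H1 H2 (fun n m => Rmult_comm n m)).
  intro H. eapply is_derive_ext. { intro t. reflexivity. }
  replace (/ y * Rpower (w y) (p - 1) * ((p - 1) * (dw / w y) - / y))
    with (plus (mult (- 1 / y ^ 2) (Rpower (w y) (p - 1))) (mult (/ y) (dw * ((p - 1) * Rpower (w y) (p - 1 - 1))))).
  exact H.
  unfold plus, mult; simpl.
  assert (E : Rpower (w y) (p - 1) = Rpower (w y) (p - 1 - 1) * w y).
  { rewrite <- (Rpower_1 (w y)) at 3 by lra. rewrite <- Rpower_plus. f_equal; ring. }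
  rewrite E. field. lra.
Qed.

Theorem lemma7p3 (p alpha Rb y0 : R) (phi dphi ddphi : R -> R) :
  1 < p -> 0 < alpha -> 0 < Rb -> 0 < y0 ->
  (* initial conditions at y = 0 (one-sided) *)
  phi 0 = 0 -> dphi 0 = alpha ->
  filterlim phi (at_right 0) (locally 0) ->
  filterlim dphi (at_right 0) (locally alpha) ->
  (* dphi = phi', ddphi = phi'' on (0, oo) *)
  (forall y, 0 < y -> is_derive phi y (dphi y)) ->
  (forall y, 0 < y -> is_derive dphi y (ddphi y)) ->
  (* the ODE *)
  (forall y, 0 < y ->
     ddphi y = / 2 * y * dphi y - gamma p * phi y - absp (dphi y) p) ->
  (forall y, 0 < y -> 0 < phi y /\ 0 < dphi y) ->
  (forall y, 0 <= y < Rb -> ddphi y < 0) ->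
  (forall y, Rb < y -> 0 < ddphi y) ->
  (forall y, y0 <= y -> 0 < phi y /\ 0 < dphi y /\ 0 < ddphi y) ->
  (* (i) *)
  (exists C, 0 < C /\ forall y, y0 <= y -> dphi y <= C * Rpower y (beta p)) /\
  (* (ii) liminf_{y->oo} Z(y) >= 1/2 min(1, beta) *)
  (forall eps, 0 < eps -> exists Y, forall y, Y <= y ->
     / 2 * Rmin 1 (beta p) - eps <= Zf p dphi y) /\
  (exists C1, 0 < C1 /\ forall y, 1 <= y -> C1 * Rpower y (beta p) <= dphi y).
Proof.
  intros Hp Ha HRb Hy0 H0 Hd0 Hl1 Hl2 Dphi Ddphi ODE Hpos Hneg Hposdd Hy0pos.
  assert (Wp : forall y, 0 < y -> 0 < dphi y) by (intros; apply Hpos; auto).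
  assert (Pp : forall y, 0 < y -> 0 < phi y) by (intros; apply Hpos; auto).
  set (R := fun y => Rpower (dphi y) (p - 1)).
  assert (Rp : forall y, 0 < R y) by (intros; unfold R, Rpower; apply exp_pos).
  assert (Eabs : forall y, 0 < y -> absp (dphi y) p = dphi y * R y).
  { intros y Hy. unfold absp. destruct (Req_EM_T (dphi y) 0) as [e|_].
    - specialize (Wp y Hy). lra.
    - rewrite Rabs_pos_eq by (specialize (Wp y Hy); lra). unfold R.
      rewrite <- (Rpower_1 (dphi y)) at 2 by auto. rewrite <- Rpower_plus. f_equal; ring. }
  assert (Einv : forall y, 0 < y -> Rpower (R y) (beta p) = dphi y).
  { intros y Hy. unfold R. rewrite Rpower_mult. unfold beta.
    replace ((p - 1) * (1 / (p - 1))) with 1 by (field; lra). apply Rpower_1; auto. }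
  assert (Bpos : 0 < beta p) by (unfold beta; apply Rdiv_lt_0_compat; lra).
  assert (Mono : forall a b, y0 <= a <= b -> dphi a <= dphi b).
  { intros a b Hab. destruct (Req_dec a b) as [->|ne]. lra.
    destruct (H_mvt dphi ddphi a b) as [c [Hc E]]. lra.
    intros c Hc. apply Ddphi. lra.
    assert (0 < ddphi c) by (apply Hy0pos; lra). nra. }
  assert (PhiB : forall y, y0 <= y -> phi y <= phi y0 + (y - y0) * dphi y).
  { intros y Hy. destruct (Req_dec y0 y) as [<-|ne]. lra.
    destruct (H_mvt phi dphi y0 y) as [c [Hc E]]. lra.
    intros c Hc. apply Dphi. lra.
    assert (dphi c <= dphi y) by (apply Mono; lra). nra. }
  set (K := phi y0 / dphi y0).
  assert (Kpos : 0 < K) by (unfold K; apply Rdiv_lt_0_compat; auto).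
  assert (RatB : forall y, y0 <= y -> phi y <= (K + y) * dphi y).
  { intros y Hy. assert (E : K * dphi y0 = phi y0) by (unfold K; field; specialize (Wp y0 Hy0); lra).
    assert (dphi y0 <= dphi y) by (apply Mono; lra).
    specialize (PhiB y Hy). assert (0 < dphi y) by (apply Wp; lra). nra. }
  assert (ODE2 : forall y, 0 < y -> ddphi y = / 2 * y * dphi y - gamma p * phi y - dphi y * R y).
  { intros y Hy. rewrite ODE by auto. rewrite Eabs by auto. ring. }
  assert (PartII : forall eps, 0 < eps -> exists Y, forall y, Y <= y ->
     / 2 * Rmin 1 (beta p) - eps <= Zf p dphi y).
  { set (m := / 2 * Rmin 1 (beta p)). set (D0 := Rabs (gamma p) * K).
    assert (D0p : 0 <= D0) by (unfold D0; apply Rmult_le_pos; [apply Rabs_pos|lra]).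
    set (Z := Zf p dphi).
    assert (ZR : forall y, 0 < y -> y * Z y = R y).
    { intros y Hy. unfold Z, Zf. fold (R y). field. lra. }
    assert (Zpos : forall y, 0 < y -> 0 < Z y).
    { intros y Hy. unfold Z, Zf. apply Rmult_lt_0_compat. apply Rinv_0_lt_compat; lra. apply Rp. }
    assert (Zder : forall y, 0 < y -> is_derive Z y (Z y * ((p - 1) * (ddphi y / dphi y) - / y))).
    { intros y Hy. unfold Z, Zf. apply H_Zder; auto. }
    assert (Gam : gamma p = / 2 - beta p / 2) by (unfold gamma, beta; field; lra).
    assert (KI : forall y, y0 <= y -> ddphi y / dphi y >= y * (m - Z y) - D0).
    { intros y Hy. assert (Wy : 0 < dphi y) by (apply Wp; lra).
      set (q := phi y / dphi y).
      assert (q0 : 0 <= q) by (unfold q; left; apply Rdiv_lt_0_compat; auto; apply Pp; lra).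
      assert (q1 : q <= K + y).
      { unfold q. apply (Rmult_le_reg_l (dphi y)); auto. 
        replace (dphi y * (phi y / dphi y)) with (phi y) by (field; lra). rewrite Rmult_comm. auto. }
      assert (E : ddphi y / dphi y = / 2 * y - gamma p * q - R y).
      { rewrite ODE2 by lra. unfold q. field. lra. }
      rewrite E. rewrite <- (ZR y) by lra. unfold m, D0.
      destruct (Rle_lt_dec 1 (beta p)) as [b1|b1].
      - rewrite Rmin_left by lra. assert (gamma p <= 0) by lra.
        rewrite Rabs_left1 by lra. nra.
      - rewrite Rmin_right by lra. assert (0 < gamma p) by lra.
        rewrite Rabs_pos_eq by lra. nra. }
    intros eps Heps. fold m.
    destruct (Rle_lt_dec m eps) as [me|me].
    { exists 1. intros y Hy. specialize (Zpos y ltac:(lra)). lra. }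
    set (T := m - eps).
    set (y1 := Rmax (Rmax y0 1) (((p - 1) * D0 + 2) / ((p - 1) * eps))).
    assert (y1a : y0 <= y1 /\ 1 <= y1 /\ ((p - 1) * D0 + 2) / ((p - 1) * eps) <= y1).
    { unfold y1. generalize (Rmax_l (Rmax y0 1) (((p - 1) * D0 + 2) / ((p - 1) * eps))).
      generalize (Rmax_r (Rmax y0 1) (((p - 1) * D0 + 2) / ((p - 1) * eps))).
      generalize (Rmax_l y0 1) (Rmax_r y0 1). lra. }
    assert (Bar : forall y, y1 <= y -> Z y <= T ->
       Z y <= Z y * ((p - 1) * (ddphi y / dphi y) - / y)).
    { intros y Hy HZ. destruct y1a as [a1 [a2 a3]].
      assert (Hy' : y0 <= y) by lra.
      specialize (KI y Hy'). specialize (Zpos y ltac:(lra)).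
      assert (iy : / y <= 1).
      { rewrite <- Rinv_1. apply Rinv_le_contravar; lra. }
      assert (C : (p - 1) * D0 + 2 <= (p - 1) * eps * y).
      { assert (0 < (p-1)*eps) by (apply Rmult_lt_0_compat; lra).
        assert (EE : (p - 1) * D0 + 2 = ((p - 1) * D0 + 2) / ((p - 1) * eps) * ((p-1)*eps))
          by (field; lra).
        rewrite EE. nra. }
      assert (1 <= (p - 1) * (ddphi y / dphi y) - / y).
      { assert (y * (m - Z y) - D0 >= y * eps - D0) by (unfold T in HZ; nra). nra. }
      nra. }
    set (Zd := fun t => Z t * ((p - 1) * (ddphi t / dphi t) - / t)).
    assert (T0 : 0 < T) by (unfold T; lra).
    destruct y1a as [a1 [a2 a3]].
    assert (StA : exists y2, y1 <= y2 /\ T < Z y2).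
    { apply NNPP. intro Hn.
      assert (All : forall y, y1 <= y -> Z y <= T).
      { intros y Hy. apply Rnot_lt_le. intro. apply Hn. exists y; auto. }
      assert (Inc : forall y, y1 <= y -> Z y1 <= Z y).
      { intros y Hy. destruct (Req_dec y1 y) as [<-|ne]. lra.
        destruct (H_mvt Z Zd y1 y) as [c [Hc E]]. lra.
        intros c Hc; apply Zder; lra.
        assert (Z c <= Zd c) by (apply Bar; [lra| apply All; lra]).
        assert (0 < Z c) by (apply Zpos; lra). nra. }
      assert (Z1 : 0 < Z y1) by (apply Zpos; lra).
      set (y := y1 + T / Z y1 + 1).
      assert (TZ : 0 < T / Z y1) by (apply Rdiv_lt_0_compat; auto).
      assert (EZ : Z y1 * (T / Z y1) = T) by (field; lra).
      destruct (H_mvt Z Zd y1 y) as [c [Hc E]]. unfold y; lra.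
      intros c Hc; apply Zder; unfold y in Hc; lra.
      assert (Z c <= Zd c) by (apply Bar; [lra| apply All; lra]).
      assert (Z y1 <= Z c) by (apply Inc; lra).
      assert (Z y <= T) by (apply All; unfold y; lra).
      assert (U : y - y1 = T / Z y1 + 1) by (unfold y; ring).
      rewrite U in E.
      assert (Z y1 * (T / Z y1 + 1) <= Zd c * (T / Z y1 + 1)) by (apply Rmult_le_compat_r; lra).
      nra. }
    destruct StA as [y2 [Hy2 HZ2]]. exists y2. intros y Hy. fold T.
    apply Rnot_lt_le; intro Hlt.
    assert (yy : y2 < y) by (destruct (Req_dec y2 y) as [<-|]; lra).
    destruct (continuity_ab_min Z y2 y) as [c [Cmin Cr]]. lra.
    { intros c Hc. apply (H_cont Z c (Zd c)). apply Zder; lra. }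
    assert (Zc : Z c < T) by (specialize (Cmin y); lra).
    assert (c2 : y2 < c) by (destruct (Req_dec y2 c) as [<-|]; lra).
    assert (Hc := H_cont Z c (Zd c) (Zder c ltac:(lra))).
    unfold continuity_pt, continue_in, limit1_in, limit_in in Hc.
    destruct (Hc (T - Z c)) as [d [dpos Hd]]. lra.
    set (x := Rmax y2 (c - d / 2)).
    assert (xa : y2 <= x /\ c - d / 2 <= x /\ x < c).
    { unfold x. split. apply Rmax_l. split. apply Rmax_r.
      apply Rmax_lub_lt; lra. }
    destruct (H_mvt Z Zd x c) as [xi [Hxi E]]. lra.
    intros t Ht; apply Zder; lra.
    assert (Zxi : Z xi < T).
    { assert (HH : R_dist (Z xi) (Z c) < T - Z c).
      { apply Hd. split. unfold D_x, no_cond. split; [exact I| lra]. simpl. unfold R_dist.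
        rewrite Rabs_left1; lra. }
      unfold R_dist in HH. generalize (Rle_abs (Z xi - Z c)). lra. }
    assert (Z xi <= Zd xi) by (apply Bar; [lra|lra]).
    assert (0 < Z xi) by (apply Zpos; lra).
    assert (Z c <= Z x) by (apply Cmin; lra).
    nra. }
  split; [|split].
  -
    set (A := / 2 + Rabs (gamma p) + Rabs (gamma p) * K / y0).
    assert (Apos : 0 < A).
    { unfold A. assert (0 <= Rabs (gamma p) * K / y0).
      { apply Rmult_le_pos. apply Rmult_le_pos. apply Rabs_pos. lra. left; apply Rinv_0_lt_compat; lra. }
      generalize (Rabs_pos (gamma p)); lra. }
    exists (Rpower A (beta p)). split. unfold Rpower; apply exp_pos.
    intros y Hy.
    assert (RA : R y <= A * y).
    { destruct (Hy0pos y Hy) as [Pp' [Wp' Dp']].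
      rewrite ODE2 in Dp' by lra. specialize (RatB y Hy).
      assert (G1 : - gamma p * phi y <= Rabs (gamma p) * phi y).
      { generalize (Rle_abs (- gamma p)); rewrite Rabs_Ropp; nra. }
      assert (G2 : Rabs (gamma p) * phi y <= Rabs (gamma p) * ((K + y) * dphi y)).
      { apply Rmult_le_compat_l. apply Rabs_pos. auto. }
      assert (G3 : R y < / 2 * y + Rabs (gamma p) * (K + y)).
      { apply (Rmult_lt_reg_l (dphi y)); auto. nra. }
      assert (G4 : Rabs (gamma p) * K <= Rabs (gamma p) * K / y0 * y).
      { assert (0 <= Rabs (gamma p) * K) by (apply Rmult_le_pos; [apply Rabs_pos|lra]).
        unfold Rdiv. rewrite Rmult_assoc. 
        assert (1 <= / y0 * y). { apply (Rmult_le_reg_l y0); auto. rewrite <- Rmult_assoc, Rinv_r; lra. }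
        nra. }
      unfold A. nra. }
    rewrite <- (Einv y) by lra. rewrite Rpower_mult_distr by lra.
    apply Rle_Rpower_l; [lra|]. split; auto.
  - exact PartII.
  - set (m := / 2 * Rmin 1 (beta p)).
    assert (m0 : 0 < m) by (unfold m; apply Rmult_lt_0_compat; [lra|apply Rmin_glb_lt; lra]).
    destruct (PartII (m / 2)) as [Y HY]. lra. fold m in HY.
    set (Y' := Rmax Y 1).
    assert (Ya : Y <= Y' /\ 1 <= Y') by (split; [apply Rmax_l|apply Rmax_r]).
    destruct (continuity_ab_min dphi 1 Y') as [c [Cmin Cr]]. lra.
    { intros t Ht. apply (H_cont dphi t (ddphi t)). apply Ddphi; lra. }
    set (P := Rpower (m / 2) (beta p)).
    assert (P0 : 0 < P) by (unfold P, Rpower; apply exp_pos).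
    assert (PY : 0 < Rpower Y' (beta p)) by (unfold Rpower; apply exp_pos).
    assert (Wc : 0 < dphi c) by (apply Wp; lra).
    exists (Rmin P (dphi c / Rpower Y' (beta p))). split.
    { apply Rmin_glb_lt; auto. apply Rdiv_lt_0_compat; auto. }
    intros y Hy.
    assert (Py : 0 < Rpower y (beta p)) by (unfold Rpower; apply exp_pos).
    destruct (Rle_lt_dec Y' y) as [yl|yl].
    + assert (Zy : m - m / 2 <= Zf p dphi y) by (apply HY; lra).
      assert (RR : m / 2 * y <= R y).
      { unfold Zf in Zy. fold (R y) in Zy.
        replace (R y) with (y * (/ y * R y)) by (field; lra). nra. }
      rewrite <- (Einv y) by lra.
      apply Rle_trans with (Rpower (m / 2 * y) (beta p)).
      { rewrite <- Rpower_mult_distr by lra. fold P.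
        apply Rmult_le_compat_r. lra. apply Rmin_l. }
      apply Rle_Rpower_l; [lra|]. split; [|auto]. nra.
    + assert (Ry : Rpower y (beta p) <= Rpower Y' (beta p)) by (apply Rle_Rpower_l; lra).
      assert (dphi c <= dphi y) by (apply Cmin; lra).
      apply Rle_trans with (dphi c / Rpower Y' (beta p) * Rpower y (beta p)).
      { apply Rmult_le_compat_r. lra. apply Rmin_r. }
      apply Rle_trans with (dphi c / Rpower Y' (beta p) * Rpower Y' (beta p)).
      { apply Rmult_le_compat_l. left; apply Rdiv_lt_0_compat; auto. auto. }
      replace (dphi c / Rpower Y' (beta p) * Rpower Y' (beta p)) with (dphi c) by (field; lra).
      auto.
Qed.
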